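(* Let $q$ be a prime power, let $p$ be the characteristic of $\mathbb{F}_q$, and let $r = 2n+1$ be a prime such that $q$ is a primitive root modulo $r$. Let $\beta \in \mathbb{F}_{q^{2n}}$ be a primitive $r$th root of unity and put $\alpha = \beta + \beta^{-1} \in \mathbb{F}_{q^n}$. Then the multiplicative order $L_n$ of $\alpha$ satisfies $$L_n \geqslant P(n-1, p-1).$$
   Context: For integers $s \geqslant 1$ and $v \geqslant 0$, $P(s,v)$ denotes the number of integer partitions of $s$ in which each part appears at most $v$ times, i.e. the number of solutions of $\sum_{j=1}^{s} u_j j = s$ in non-negative integers $u_1,\ldots,u_s \leqslant v$. The element $\alpha$ is called a Gauss period of type $(n,2)$. *)

(* Defs.v *)
From mathcomp Require Import all_boot all_algebra all_field.
Set Implicit Arguments. Unset Strict Implicit. Unset Printing Implicit Defensive.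
Import GRing.Theory.

(* P s v : number of partitions of s in which each part appears at most v
   times, i.e. number of (u_1,...,u_s) with 0 <= u_j <= v and
   sum_j u_j * j = s.  Here u_j is stored at index j-1 (an ordinal of s). *)
Definition P (s v : nat) : nat :=
  #|[set u : {ffun 'I_s -> 'I_v.+1} | \sum_(j < s) (u j : nat) * j.+1 == s]|.

Definition prim_root_mod (q r : nat) : bool :=
  ((r.-1).-primitive_root (q%:R : 'F_r))%R.

(* Main.v *)
Require Import Defs.
From mathcomp Require Import all_boot all_algebra all_field.
From mathcomp Require Import ring zify.
Import GRing.Theory.
Local Open Scope ring_scope.

Definition Qp (K : fieldType) (o : nat) (u : nat -> nat) (N : nat) : {poly K} :=
  \prod_(i < N) (1 + 'X^((i + o).+1)) ^+ u i.

Definition formw (K : fieldType) (w : nat) (c : K) (P : {poly K}) :=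
  exists R : {poly K}, P = 1 + c%:P * 'X^(w.+1) + 'X^(w.+2) * R.

Arguments formw {K}.

Lemma form_mul (K : fieldType) w c1 c2 (A B : {poly K}) :
  formw w c1 A -> formw w c2 B -> formw w (c1 + c2) (A * B).
Proof.
move=> [R1 ->] [R2 ->].
exists (R1 + R2 + (c1*c2)%:P * 'X^w + c1%:P * 'X^(w.+1) * R2 + c2%:P * 'X^(w.+1) * R1
   + 'X^(w.+2) * R1 * R2).
rewrite polyCD polyCM !exprS; ring.
Qed.

Lemma form_exp (K : fieldType) w d :
  formw w (d%:R : K) ((1 + 'X^(w.+1)) ^+ d).
Proof.
elim: d => [|d [R eR]]; first by exists 0; rewrite expr0 mulr0 polyC0 !(mul0r, addr0).
rewrite exprS mulrS; apply: form_mul; last by exists R.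
by exists 0; rewrite mulr0 addr0 polyC1 mul1r.
Qed.

Lemma form_coef (K : fieldType) w c (P : {poly K}) : formw w c P -> P`_w.+1 = c.
Proof.
move=> [R ->]; rewrite !coefD coef1 coefCM coefXn coefXnM ltnSn eqxx.
by rewrite mulr1 add0r addr0.
Qed.

Lemma Q_high (K : fieldType) o u N : exists R, Qp K o u N = 1 + 'X^(o.+1) * R.
Proof.
rewrite /Qp; apply: (big_ind (fun A : {poly K} => exists R, A = 1 + 'X^(o.+1) * R)).
- by exists 0; rewrite mulr0 addr0.
- move=> _ _ [R1 ->] [R2 ->]; exists (R1 + R2 + 'X^(o.+1) * R1 * R2); ring.
move=> i _; elim: (u i) => [|d [R eR]]; first by exists 0; rewrite expr0 mulr0 addr0.
rewrite exprS eR; exists ('X^i + R + 'X^(o.+1) * 'X^i * R).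
rewrite -addnS exprD; ring.
Qed.

Lemma Q_S (K : fieldType) o u N :
  Qp K o u N.+1 = (1 + 'X^(o.+1)) ^+ u 0%N * Qp K o.+1 (fun i => u i.+1) N.
Proof.
rewrite /Qp big_ord_recl /=; congr (_ * _); apply: eq_bigr => i _.
by rewrite /= addSnnS.
Qed.

Lemma coef0_neq0 (K : fieldType) (P : {poly K}) : P`_0 = 1 -> P != 0.
Proof. by move=> h; apply/eqP => e; move: h; rewrite e coef0 => /eqP; rewrite eq_sym oner_eq0. Qed.

Lemma step_le (K : fieldType) p (hchar : p \in [pchar K]) w a b (A B : {poly K}) :
  (a < p)%N -> (b <= a)%N ->
  (exists R, A = 1 + 'X^(w.+2) * R) -> (exists R, B = 1 + 'X^(w.+2) * R) ->
  (1 + 'X^(w.+1)) ^+ a * A = (1 + 'X^(w.+1)) ^+ b * B -> a = b.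
Proof.
move=> ha hba [R eA] [S eB].
have nz : (1 + 'X^(w.+1) : {poly K}) ^+ b != 0.
  by apply: expf_neq0; apply: coef0_neq0; rewrite coefD coef1 coefXn /= addr0.
rewrite -(subnKC hba) exprD -mulrA => /(mulfI nz) e.
have f1 : formw w ((a - b)%:R + 0) ((1 + 'X^(w.+1)) ^+ (a - b) * A).
  by apply: form_mul; [apply: form_exp | exists R; rewrite eA polyC0 mul0r addr0].
have f2 : formw w 0 B by exists S; rewrite eB polyC0 mul0r addr0.
move: (@form_coef _ _ _ _ f1) (@form_coef _ _ _ _ f2); rewrite e addr0 => -> /eqP.
rewrite -(dvdn_pcharf hchar) => hd.
case: (posnP (a - b)) => [|hpos]; first by lia.
have := dvdn_leq hpos hd; lia.
Qed.

Arguments step_le {K p} hchar {w a b A B}.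

Lemma Q_inj (K : fieldType) p (hchar : p \in [pchar K]) N : forall o u v,
  (forall i, (i < N)%N -> (u i < p)%N) -> (forall i, (i < N)%N -> (v i < p)%N) ->
  Qp K o u N = Qp K o v N -> forall i, (i < N)%N -> u i = v i.
Proof.
elim: N => [//|N IH] o u v hu hv; rewrite !Q_S => e.
have [ea eb] : u 0%N = v 0%N /\ Qp K o.+1 (fun i => u i.+1) N = Qp K o.+1 (fun i => v i.+1) N.
  have e0 : u 0%N = v 0%N.
    have [h|h] := leqP (v 0%N) (u 0%N).
      by apply: (step_le hchar (hu _ _) h (Q_high _ _ _ _) (Q_high _ _ _ _) e).
    exact/esym/(step_le hchar (hv _ _) (ltnW h) (Q_high _ _ _ _) (Q_high _ _ _ _) (esym e)).
  split=> //; move: e; rewrite e0; apply: mulfI.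
  by apply: expf_neq0; apply: coef0_neq0; rewrite coefD coef1 coefXn /= addr0.
case=> [|i] hi //.
by apply: (IH o.+1 (fun i => u i.+1) (fun i => v i.+1)) => // j hj; [apply: hu | apply: hv].
Qed.

Lemma frob_add (K : fieldType) p (hchar : p \in [pchar K]) m (x y : K) :
  (x + y) ^+ (p ^ m) = x ^+ (p ^ m) + y ^+ (p ^ m).
Proof.
elim: m => [|m IH]; first by rewrite !expr1.
rewrite expnSr !exprM IH.
by rewrite -!(pFrobenius_autE hchar) rmorphD.
Qed.

Lemma map_Q (K : fieldType) p (hchar : p \in [pchar K]) o u N :
  map_poly (pFrobenius_aut hchar) (Qp K o u N) = Qp K o u N.
Proof.
rewrite /Qp rmorph_prod; apply: eq_bigr => i _.
rewrite rmorphXn rmorphD rmorph1 rmorphXn; congr ((1 + _ ^+ _) ^+ _); exact: map_polyX.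
Qed.

Lemma frob_root (K : fieldType) p (hchar : p \in [pchar K]) (D : {poly K})
  (hD : map_poly (pFrobenius_aut hchar) D = D) x m :
  D.[x] = 0 -> D.[x ^+ (p ^ m)] = 0.
Proof.
move=> h; elim: m => [|m IH]; first by rewrite expr1.
rewrite expnSr exprM -(pFrobenius_autE hchar) -{1}hD horner_map IH.
by rewrite rmorph0.
Qed.

Lemma size_Q (K : fieldType) o u N :
  (size (Qp K o u N) <= (\sum_(i < N) (i + o).+1 * u i).+1)%N.
Proof.
rewrite /Qp; elim: N => [|N IH]; first by rewrite !big_ord0 size_poly1.
rewrite !big_ord_recr /=.
have h1 : (size ((1 + 'X^((N + o).+1)) ^+ u N : {poly K}) <= ((N + o).+1 * u N).+1)%N.
  have := size_exp (1 + 'X^((N + o).+1) : {poly K}) (u N).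
  have -> : size (1 + 'X^((N + o).+1) : {poly K}) = (N + o).+2.
    by rewrite addrC size_polyDl size_polyXn // size_poly1.
  move=> /= he; rewrite -[X in (X <= _)%N]prednK ?he //.
  rewrite lt0n size_poly_eq0 expf_neq0 // -size_poly_eq0 addrC size_polyDl size_polyXn ?size_poly1 //.
apply: (leq_trans (size_polyMleq _ _)); move: IH h1.
set a := size _; set b := size _; clearbody a b; set S := \sum_(i < N) _; clearbody S; lia.
Qed.

Lemma q_cover q r (hrprime : prime r) (hprim : prim_root_mod q r) j :
  (0 < j < r)%N -> exists i, (q ^ i %% r = j %% r)%N.
Proof.
move=> /andP [j0 jr].
set x : 'F_r := j%:R.
have xnz : x != 0.
  apply/eqP => e; have := val_Fp_nat hrprime j; rewrite -/x e /= modn_small //.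
  by lia.
have hr0 : (0 < r)%N by apply: prime_gt0.
have hx : x ^+ r.-1 = 1.
  apply: (mulfI xnz); rewrite mulr1 -exprS (prednK hr0).
  by have := expf_card x; rewrite card_Fp.
have [i hi] := prim_rootP hprim hx.
exists i; rewrite -(val_Fp_nat hrprime) -(val_Fp_nat hrprime j) natrX.
by rewrite -/x hi.
Qed.

Lemma aux1 n j : (1 <= j < 1 + n)%N -> (0 < j < (2 * n).+1)%N.
Proof. lia. Qed.
Lemma aux2 n j : (1 <= j < 1 + n)%N -> (j < (2 * n).+1)%N.
Proof. lia. Qed.
Lemma aux3 n a b c : (0 < n)%N -> (a <= (n.-1).+1)%N -> (b <= (n.-1).+1)%N ->
  (c <= maxn a b)%N -> (n < c)%N -> False.
Proof. lia. Qed.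

Theorem theorem1 (p k q n r : nat) (K : finFieldType) (beta : K)
  (hp : prime p) (hk : (0 < k)%N) (hq : q = (p ^ k)%N)
  (hchar : p \in [pchar K]) (hK : #|K| = (q ^ (2 * n))%N)
  (hr : r = (2 * n).+1) (hrprime : prime r) (hprim : prim_root_mod q r)
  (hbeta : r.-primitive_root beta) :
  let alpha := beta + beta^-1 in
  exists L : nat, L.-primitive_root alpha /\ (P n.-1 p.-1 <= L)%N.
Proof.
move=> alpha.
have hr0 : (0 < r)%N by apply: prime_gt0.
have n0 : (0 < n)%N by move: hrprime; rewrite hr; case: (n) => //.
have hp0 : (0 < p)%N by apply: prime_gt0.
have bnz : beta != 0.
  apply/eqP => b0; have := prim_expr_order hbeta; rewrite b0 expr0n.
  case: r hr0 {hr hrprime hprim hbeta} => // r' _ /= /eqP; rewrite eq_sym oner_eq0.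
  done.
pose gam := beta ^+ 2.
have hgam : r.-primitive_root gam.
  by rewrite prim_root_exp_coprime // coprime2n hr oddS oddM.
have hpow : forall z : K, r.-primitive_root z -> forall j, (0 < j < r)%N ->
    exists m, z ^+ (p ^ m) = z ^+ j.
  move=> z hz j hj; have [i hi] := q_cover _ _ hrprime hprim _ hj; exists (k * i)%N.
  by rewrite expnM -hq -(prim_expr_mod hz) hi (prim_expr_mod hz).
have ident : forall w, beta ^+ w + (beta ^+ w)^-1 = (beta ^+ w)^-1 * (1 + gam ^+ w).
  move=> w; have bw : beta ^+ w != 0 := expf_neq0 _ bnz.
  rewrite /gam -exprM mulnC exprM mulrDr mulr1 expr2 mulrA mulVf // mul1r addrC.
  done.
have anz : alpha != 0.
  have := ident 1%N; rewrite !expr1 -/alpha => ->.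
  rewrite mulf_neq0 ?invr_eq0 //; apply/eqP => e.
  have g2 : gam ^+ 2 = gam ^+ 0.
    have -> : gam = -1 by apply/eqP; rewrite -addr_eq0 addrC e.
    by rewrite expr0 sqrrN expr1n.
  move/eqP: g2; rewrite (eq_prim_root_expr hgam) mod0n modn_small //.
  by rewrite hr; lia.
have cK : (1 < #|K|)%N.
  by apply/card_gt1P; exists 0, 1; rewrite !inE eq_sym oner_eq0.
have a1 : alpha ^+ #|K|.-1 = 1.
  apply: (mulfI anz); rewrite mulr1 -exprS prednK ?expf_card //; lia.
have [L hL _] := prim_order_exists (ltac:(lia) : (0 < #|K|.-1)%N) a1.
have L0 : (0 < L)%N := prim_order_gt0 hL.
exists L; split=> //.
rewrite /P.
set s := n.-1.
set U := [set u : {ffun 'I_s -> 'I_p.-1.+1} | _].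
pose f (u : {ffun 'I_s -> 'I_p.-1.+1}) :=
  \prod_(j < s) (beta ^+ j.+1 + (beta ^+ j.+1)^-1) ^+ (u j).
pose uo (u : {ffun 'I_s -> 'I_p.-1.+1}) (i : nat) :=
  oapp (fun j : 'I_s => nat_of_ord (u j)) 0%N (insub i : option 'I_s).
have uoE : forall u (j : 'I_s), uo u j = u j by move=> u j; rewrite /uo valK.
have uop : forall u i, (uo u i < p)%N.
  move=> u i; rewrite /uo; case: insubP => [j _ _|_] //=.
  by have := ltn_ord (u j); move: (nat_of_ord (u j)) => x; lia.
have hfpow : forall u, exists e, f u = alpha ^+ e.
  move=> u; rewrite /f; apply: (big_ind (fun x => exists e, x = alpha ^+ e)).
  - by exists 0%N.
  - by move=> _ _ [e1 ->] [e2 ->]; exists (e1 + e2)%N; rewrite exprD.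
  move=> j _.
  have hj : (0 < j.+1 < r)%N by have := ltn_ord j; rewrite hr /s; lia.
  have [m hm] := hpow _ hbeta _ hj.
  exists (p ^ m * u j)%N; rewrite exprM /alpha frob_add // exprVn -hm.
  done.
have hsub : f @: U \subset (fun i : 'I_L => alpha ^+ i) @: setT.
  apply/subsetP => y /imsetP [u _ ->]; have [e ->] := hfpow u.
  apply/imsetP; exists (Ordinal (ltn_pmod e L0)); first by rewrite inE.
  by rewrite /= (prim_expr_mod hL).
have hsum : forall u, u \in U -> (\sum_(i < s) (i + 0).+1 * uo u i = s)%N.
  move=> u; rewrite inE => /eqP hu; rewrite -[RHS]hu; apply: eq_bigr => i _.
  by rewrite addn0 uoE mulnC.
have hfQ : forall u, u \in U -> f u = (beta ^+ s)^-1 * (Qp K 0 (uo u) s).[gam].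
  move=> u; rewrite inE => /eqP hu.
  rewrite /f; under eq_bigr => j _ do rewrite ident exprMn.
  rewrite big_split /=; congr (_ * _).
    under eq_bigr => j _ do rewrite exprVn -exprM mulnC.
    by rewrite prodfV prodrXr hu.
  rewrite /Qp horner_prod; apply: eq_bigr => j _.
  by rewrite horner_exp hornerD hornerC hornerXn addn0 uoE.
have hinj : {in U &, injective f}.
  move=> u v hu hv e.
  have eQ : (Qp K 0 (uo u) s).[gam] = (Qp K 0 (uo v) s).[gam].
    move: e; rewrite (hfQ _ hu) (hfQ _ hv); apply: mulfI.
    by rewrite invr_eq0 expf_neq0.
  pose D := Qp K 0 (uo u) s - Qp K 0 (uo v) s.
  have D0 : D = 0.
    apply: contraTeq isT => Dnz.
    have hD0 : D.[gam] = 0 by rewrite hornerD hornerN eQ subrr.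
    have hmap : map_poly (pFrobenius_aut hchar) D = D.
      have m1 := map_Q _ _ hchar 0 (uo u) s; have m2 := map_Q _ _ hchar 0 (uo v) s.
      by rewrite /D rmorphB /= m1 m2.
    have := max_poly_roots Dnz (rs := [seq gam ^+ j | j <- iota 1 n]).
    have -> : all (root D) [seq gam ^+ j | j <- iota 1 n].
      apply/allP => x /mapP [j]; rewrite mem_iota => hj ->.
      have hj' : (0 < j < r)%N by rewrite hr; apply: aux1.
      have [m <-] := hpow _ hgam _ hj'.
      by apply/eqP; exact: (frob_root _ _ hchar D hmap gam m hD0).
    have -> : uniq [seq gam ^+ j | j <- iota 1 n].
      rewrite map_inj_in_uniq ?iota_uniq // => i j; rewrite !mem_iota => hi hj /eqP.
      rewrite (eq_prim_root_expr hgam) !modn_small; first by move/eqP.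
        by rewrite hr; apply: aux2.
      by rewrite hr; apply: aux2.
    move=> /(_ isT isT); rewrite size_map size_iota.
    have s1 := size_Q K 0 (uo u) s; have s2 := size_Q K 0 (uo v) s.
    rewrite (hsum _ hu) in s1; rewrite (hsum _ hv) in s2.
    have s3 := size_polyD (Qp K 0 (uo u) s) (- Qp K 0 (uo v) s).
    rewrite size_polyN in s3.
    rewrite -/D in s3; move=> hc; exfalso; exact: (aux3 _ _ _ _ n0 s1 s2 s3 hc).
  have eQQ : Qp K 0 (uo u) s = Qp K 0 (uo v) s by apply/eqP; rewrite -subr_eq0 -/D D0.
  have := Q_inj _ _ hchar s 0 (uo u) (uo v) (fun i _ => uop u i) (fun i _ => uop v i) eQQ.
  move=> h; apply/ffunP => j; apply/val_inj; have := h j (ltn_ord j); by rewrite !uoE.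
rewrite -(card_in_imset hinj).
apply: (leq_trans (subset_leq_card hsub)).
by rewrite (leq_trans (leq_imset_card _ _)) // cardsT card_ord.
Qed.
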